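(* Let $(\Omega,\mathbb B(\Omega),\mu,T)$ be a measure-preserving dynamical system and let $\mathbf X=(X_1,\dots,X_N)$ be an $\mathbb R^N$-valued random vector on $(\Omega,\mathbb B(\Omega))$ satisfying condition (OR), i.e. $h_\mu(T)=\lim_{d\to\infty}h_\mu(T,\mathcal P^{\mathbf X}(d))$. Then: (i) $h_\mu(T)\le \limsup_{d\to\infty}h^{\mathbf X}_{\mu,\mathrm{cond}}(T,d)\le \limsup_{d\to\infty}h^{\mathbf X}_{\mu,\triangle}(T,d)$. (ii) If moreover either there is $d_0\in\mathbb N$ with $h^{\mathbf X}_\mu(T,d)\ge h^{\mathbf X}_\mu(T,d+1)$ for all $d\ge d_0$, or the limit $\lim_{d\to\infty}h^{\mathbf X}_{\mu,\triangle}(T,d)$ exists, then $$h_\mu(T)\le \limsup_{d\to\infty}h^{\mathbf X}_{\mu,\mathrm{cond}}(T,d)\le \limsup_{d\to\infty}h^{\mathbf X}_{\mu,\triangle}(T,d)\le \limsup_{d\to\infty}h^{\mathbf X}_{\mu}(T,d).$$ Both statements remain true with all upper limits replaced by lower limits.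
   Context: A measure-preserving dynamical system $(\Omega,\mathbb B(\Omega),\mu,T)$ consists of a nonempty topological space $\Omega$ with Borel $\sigma$-algebra $\mathbb B(\Omega)$, a probability measure $\mu$, and a measurable map $T:\Omega\to\Omega$ with $\mu(T^{-1}B)=\mu(B)$ for all $B\in\mathbb B(\Omega)$. For a finite partition $\mathcal P=\{P_0,\dots,P_l\}\subset\mathbb B(\Omega)$ of $\Omega$: $H(\mathcal P)=-\sum_{P\in\mathcal P}\mu(P)\ln\mu(P)$ (with $0\ln0=0$); $\mathcal P_n$ is the partition consisting of the sets $P_{a_0}\cap T^{-1}(P_{a_1})\cap\dots\cap T^{-(n-1)}(P_{a_{n-1}})$, $a_i\in\{0,\dots,l\}$; $h_\mu(T,\mathcal P)=\lim_{n\to\infty}(H(\mathcal P_{n+1})-H(\mathcal P_n))$; the Kolmogorov–Sinai entropy is $h_\mu(T)=\sup_{\mathcal P}h_\mu(T,\mathcal P)$ over finite partitions. Let $\Pi_d$ be the set of permutations of $\{0,1,\dots,d\}$. A vector $(x_0,\dots,x_d)\in\mathbb R^{d+1}$ has ordinal pattern $\pi=(r_0,\dots,r_d)\in\Pi_d$ if $x_{r_0}\ge x_{r_1}\ge\dots\ge x_{r_d}$ and $r_{l-1}>r_l$ whenever $x_{r_{l-1}}=x_{r_l}$. For a random vector $\mathbf X=(X_1,\dots,X_N)$ and $d\in\mathbb N$, the ordinal partition $\mathcal P^{\mathbf X}(d)$ consists of the sets $P_{(\pi_1,\dots,\pi_N)}=\{\omega: (X_i(T^{d}\omega),X_i(T^{d-1}\omega),\dots,X_i(T\omega),X_i(\omega))\text{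 has ordinal pattern }\pi_i\text{ for } i=1,\dots,N\}$, $\pi_i\in\Pi_d$. Permutation entropy: $h^{\mathbf X}_\mu(T,d)=\frac1d H(\mathcal P^{\mathbf X}(d))$. Sorting entropy: $h^{\mathbf X}_{\mu,\triangle}(T,d)=H(\mathcal P^{\mathbf X}(d+1))-H(\mathcal P^{\mathbf X}(d))$. Conditional entropy of ordinal patterns: $h^{\mathbf X}_{\mu,\mathrm{cond}}(T,d)=H(\mathcal P^{\mathbf X}(d)_2)-H(\mathcal P^{\mathbf X}(d))$. *)

(* Defs.v *)
From HB Require Import structures.
From mathcomp Require Import all_boot all_order all_algebra all_fingroup.
From mathcomp Require Import all_classical all_reals all_analysis.
Unset Printing Implicit Defensive.
Import Order.TTheory GRing.Theory Num.Theory.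
Local Open Scope classical_set_scope.
Local Open Scope ring_scope.

Definition borel_space (Om : ptopologicalType) := g_sigma_algebraType (@open Om).

Section Entropy.
Context {Om : ptopologicalType} {R : realType}.
Local Notation B := (borel_space Om).
Context (mu : probability B R) (T : B -> B).

Definition measure_preserving :=
  measurable_fun setT T /\
  forall A : set B, measurable A -> mu (T @^-1` A) = mu A.

Definition is_partition {I : finType} (P : I -> set B) :=
  (forall i, measurable (P i)) /\
  (forall i j, i != j -> P i `&` P j = set0) /\
  (\bigcup_(i in [set: I]) P i = [set: B]).

(* H(P) = - sum_P mu(P) ln mu(P)  (with 0 ln 0 = 0, since ln 0 = 0 here) *)
Definition entropy {I : finType} (P : I -> set B) : R :=
  - \sum_(i : I) fine (mu (P i)) * ln (fine (mu (P i))).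

Definition refine_n {I : finType} (P : I -> set B) (n : nat)
  : {ffun 'I_n -> I} -> set B :=
  fun a => [set w | forall k : 'I_n, P (a k) (iter k T w)].

Definition ks_entropy_part {I : finType} (P : I -> set B) : R :=
  lim ((fun n => entropy (refine_n P n.+1) - entropy (refine_n P n)) @ \oo).

Definition ks_entropy : \bar R :=
  ereal_sup [set (ks_entropy_part (projT2 P))%:E |
     P in [set P : {l : nat & 'I_l.+1 -> set B} | is_partition (projT2 P)]
     ] .

(* The vector (x_0,...,x_d) has ordinal pattern pi = (r_0,...,r_d),
   where r_l = pi l. *)
Definition has_ordinal_pattern {d : nat} (x : 'I_d.+1 -> R)
  (pi : {perm 'I_d.+1}) : Prop :=
  forall l1 l2 : 'I_d.+1, nat_of_ord l2 = (nat_of_ord l1).+1 ->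
    x (pi l2) <= x (pi l1) /\
    (x (pi l1) = x (pi l2) -> (nat_of_ord (pi l2) < nat_of_ord (pi l1))%N).

Definition delay_vector {N : nat} (X : 'I_N -> B -> R) (i : 'I_N) (d : nat)
  (w : B) : 'I_d.+1 -> R :=
  fun j => X i (iter (d - nat_of_ord j) T w).

Definition ordinal_partition {N : nat} (X : 'I_N -> B -> R) (d : nat)
  : {ffun 'I_N -> {perm 'I_d.+1}} -> set B :=
  fun pis => [set w | forall i : 'I_N,
                 has_ordinal_pattern (delay_vector X i d w) (pis i)].

Definition perm_entropy {N} (X : 'I_N -> B -> R) (d : nat) : R :=
  entropy (ordinal_partition X d) / d%:R.

Definition sorting_entropy {N} (X : 'I_N -> B -> R) (d : nat) : R :=
  entropy (ordinal_partition X d.+1) - entropy (ordinal_partition X d).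

Definition cond_entropy {N} (X : 'I_N -> B -> R) (d : nat) : R :=
  entropy (refine_n (ordinal_partition X d) 2) - entropy (ordinal_partition X d).

End Entropy.

(* Main.v *)
Require Import Defs.
From HB Require Import structures.
From mathcomp Require Import all_boot all_order all_algebra all_fingroup.
From mathcomp Require Import all_classical all_reals all_analysis.
From mathcomp Require Import lra ring zify measurable_realfun.
Import Order.TTheory GRing.Theory Num.Theory.
Import numFieldNormedType.Exports.
Local Open Scope classical_set_scope.
Local Open Scope ring_scope.

Section RealLemmas.
Context {R : realType}.
Definition gl (x : R) := x * ln x.

Lemma gl0 : gl 0 = 0. Proof. by rewrite /gl mul0r. Qed.

Lemma gl_le_mul x S : 0 <= x -> x <= S -> gl x <= x * ln S.
Proof.
move=> x0 xS; rewrite /gl; have [->|xpos] := eqVneq x 0; first by rewrite !mul0r.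
have xgt0 : 0 < x by rewrite lt_def xpos x0.
apply: ler_wpM2l => //; rewrite ler_ln ?posrE// (lt_le_trans xgt0 xS)//.
Qed.

Lemma gl_sum_le (J : finType) (P : pred J) (f : J -> R) :
  (forall j, 0 <= f j) ->
  \sum_(j | P j) gl (f j) <= gl (\sum_(j | P j) f j).
Proof.
move=> f0; rewrite {2}/gl mulr_suml; apply: ler_sum => j Pj.
apply: gl_le_mul => //; rewrite (bigD1 j)//= lerDl sumr_ge0//.
Qed.

Lemma ln_le_sub1 (x : R) : 0 < x -> ln x <= x - 1.
Proof.
move=> x0; have := @le_ln1Dx R (x - 1); rewrite addrCA subrr addr0; apply.
by rewrite ltrBrDl subrr.
Qed.

Lemma le_sum_single (J : finType) (f : J -> R) j :
  (forall j, 0 <= f j) -> f j <= \sum_j f j.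
Proof. by move=> f0; rewrite (bigD1 j)//= lerDl sumr_ge0. Qed.

Lemma gibbs (A B : finType) (q : A -> B -> R) :
  (forall a b, 0 <= q a b) ->
  \sum_a gl (\sum_b q a b) + \sum_b gl (\sum_a q a b) <=
  \sum_a \sum_b gl (q a b) + gl (\sum_a \sum_b q a b).
Proof.
move=> q0.
set r := fun a => \sum_b q a b.
set c := fun b => \sum_a q a b.
set S := \sum_a \sum_b q a b.
have r0 a : 0 <= r a by apply: sumr_ge0.
have c0 b : 0 <= c b by apply: sumr_ge0.
have qr a b : q a b <= r a by apply: le_sum_single.
have qc a b : q a b <= c b by apply: (@le_sum_single _ (fun a => q a b)).
have rS a : r a <= S by apply: (@le_sum_single _ r).
have cS : \sum_b c b = S by rewrite /c exchange_big.
suff : \sum_a \sum_b q a b * (ln (r a) + ln (c b) - ln (q a b) - ln S) <= 0.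
  have -> : \sum_a \sum_b q a b * (ln (r a) + ln (c b) - ln (q a b) - ln S) =
    \sum_a gl (r a) + \sum_b gl (c b) - \sum_a \sum_b gl (q a b) - gl S.
    have e1 : \sum_a \sum_b q a b * ln (r a) = \sum_a gl (r a).
      by apply: eq_bigr => a _; rewrite /gl /r mulr_suml.
    have e2 : \sum_a \sum_b q a b * ln (c b) = \sum_b gl (c b).
      by rewrite exchange_big; apply: eq_bigr => b _; rewrite /gl /c mulr_suml.
    have e4 : \sum_a \sum_b q a b * ln S = gl S.
      by rewrite /gl /S mulr_suml; apply: eq_bigr => a _; rewrite mulr_suml.
    rewrite -e1 -e2 -e4 /gl -big_split -!sumrB; apply: eq_bigr => a _; rewrite -big_split -!sumrB /=.
    by apply: eq_bigr => b _; rewrite !mulrDr !mulrN.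
  by move=> H; move: H; rewrite /r /c /S; lra.
apply: (@le_trans _ _ (\sum_a \sum_b (r a * c b / S - q a b))).
  apply: ler_sum => a _; apply: ler_sum => b _.
  have [q00|qpos] := eqVneq (q a b) 0.
    by rewrite q00 mul0r subr0 mulr_ge0 ?invr_ge0 ?mulr_ge0// (le_trans (r0 a)).
  have qgt0 : 0 < q a b by rewrite lt_def qpos q0.
  have rgt0 : 0 < r a := lt_le_trans qgt0 (qr a b).
  have cgt0 : 0 < c b := lt_le_trans qgt0 (qc a b).
  have Sgt0 : 0 < S := lt_le_trans rgt0 (rS a).
  have xE : ln (r a) + ln (c b) - ln (q a b) - ln S =
            ln (r a * c b / (q a b * S)).
    have rc : 0 < r a * c b by rewrite mulr_gt0.
    have qS : 0 < q a b * S by rewrite mulr_gt0.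
    rewrite (lnM (x := r a * c b)) ?posrE ?invr_gt0//.
    rewrite (lnM (x := r a)) ?posrE// lnV ?posrE//.
    by rewrite (lnM (x := q a b)) ?posrE// opprD addrA.
  have xpos : 0 < r a * c b / (q a b * S) by rewrite !(mulr_gt0, invr_gt0).
  have H1 := ler_wpM2l (ltW qgt0) (ln_le_sub1 _ xpos). rewrite xE. apply: le_trans H1 _.
  rewrite mulrBr mulr1 le_eqVlt; apply/orP; left; apply/eqP; congr (_ - _).
  by field; rewrite ?mulf_neq0 ?gt_eqF.
rewrite (eq_bigr (fun a => r a * (\sum_b c b) / S - \sum_b q a b)); last first.
  move=> a _; rewrite sumrB; congr (_ - _).
  by rewrite -mulr_suml -mulr_sumr.
rewrite sumrB -mulr_suml -mulr_suml cS.
have -> : \sum_a r a = S by [].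
have [->|S0] := eqVneq S 0; first by rewrite !mul0r subrr.
by rewrite mulfK// subrr.
Qed.
End RealLemmas.

Section Meas.
Context {Om : ptopologicalType} {R : realType}.
Local Notation B := (borel_space Om).
Context (mu : probability B R).

Definition pm (A : set B) : R := fine (mu A).

Lemma pm_ge0 A : 0 <= pm A.
Proof. by rewrite /pm fine_ge0// measure_ge0. Qed.

Lemma mu_fin (A : set B) : measurable A -> mu A \is a fin_num.
Proof.
move=> mA; rewrite ge0_fin_numE ?measure_ge0//.
by apply: (le_lt_trans (probability_le1 mu mA)); rewrite ltry.
Qed.

Lemma pmU (A C : set B) : measurable A -> measurable C -> A `&` C = set0 ->
  pm (A `|` C) = pm A + pm C.
Proof.
move=> mA mC AC; rewrite /pm measureU// fineD//; exact: mu_fin.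
Qed.

Lemma in_bigsetU (J : eqType) (s : seq J) (D : J -> set B) x :
  (\big[setU/set0]_(j <- s) D j) x <-> exists2 j, j \in s & D j x.
Proof.
elim: s => [|a s IH]; first by rewrite big_nil; split => // -[].
rewrite big_cons; split.
  case=> [Dx|/IH [j js Dj]]; first by exists a => //; rewrite mem_head.
  by exists j => //; rewrite in_cons js orbT.
move=> [j]; rewrite in_cons => /orP[/eqP->|js] Dj; first by left.
by right; apply/IH; exists j.
Qed.

Lemma pm_bigU (J : eqType) (s : seq J) (D : J -> set B) :
  uniq s -> (forall j, measurable (D j)) ->
  (forall i j, i != j -> D i `&` D j = set0) ->
  pm (\big[setU/set0]_(j <- s) D j) = \sum_(j <- s) pm (D j).
Proof.
move=> + mD dD; elim: s => [|a s IH]; first by rewrite !big_nil /pm measure0.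
rewrite /= => /andP[aNs us]; rewrite !big_cons pmU ?IH//.
- by apply: bigsetU_measurable => j _.
- apply/seteqP; split => // x [Dax /in_bigsetU [j js Djx]].
  have : a != j by apply: contraNneq aNs => ->.
  by move/dD => /seteqP[+ _] => /(_ x) /=; apply.
Qed.

Lemma pm_split (J : finType) (C : set B) (D : J -> set B) :
  (forall j, measurable (D j)) ->
  (forall i j, i != j -> D i `&` D j = set0) ->
  (forall x, C x <-> exists j, D j x) ->
  pm C = \sum_j pm (D j).
Proof.
move=> mD dD CD.
have -> : C = \big[setU/set0]_(j <- enum J) D j.
  apply/seteqP; split => x.
    by move/CD => [j Dj]; apply/in_bigsetU; exists j => //; rewrite mem_enum.
  by move/in_bigsetU => [j _ Dj]; apply/CD; exists j.
by rewrite pm_bigU ?enum_uniq// big_enum.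
Qed.

End Meas.

Section FF.
Context {I : finType}.

Definition fcons n (a : I) (h : {ffun 'I_n -> I}) : {ffun 'I_n.+1 -> I} :=
  [ffun k => if unlift ord0 k is Some k' then h k' else a].
Definition ftl n (h : {ffun 'I_n.+1 -> I}) : {ffun 'I_n -> I} :=
  [ffun k => h (lift ord0 k)].
Definition fsnoc n (h : {ffun 'I_n -> I}) (b : I) : {ffun 'I_n.+1 -> I} :=
  [ffun k => if unlift ord_max k is Some k' then h k' else b].
Definition finit n (h : {ffun 'I_n.+1 -> I}) : {ffun 'I_n -> I} :=
  [ffun k => h (lift ord_max k)].
Arguments fcons {n}. Arguments ftl {n}. Arguments fsnoc {n}. Arguments finit {n}.

Lemma fcons0 n a (h : {ffun 'I_n -> I}) : fcons a h ord0 = a.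
Proof. by rewrite ffunE unlift_none. Qed.
Lemma fconsS n a (h : {ffun 'I_n -> I}) k : fcons a h (lift ord0 k) = h k.
Proof. by rewrite ffunE liftK. Qed.
Lemma fsnocN n b (h : {ffun 'I_n -> I}) : fsnoc h b ord_max = b.
Proof. by rewrite ffunE unlift_none. Qed.
Lemma fsnocS n b (h : {ffun 'I_n -> I}) k : fsnoc h b (lift ord_max k) = h k.
Proof. by rewrite ffunE liftK. Qed.

Lemma fcons_eta n (h : {ffun 'I_n.+1 -> I}) : fcons (h ord0) (ftl h) = h.
Proof.
apply/ffunP => k; case: (unliftP ord0 k) => [k'|] ->; first by rewrite fconsS ffunE.
by rewrite fcons0.
Qed.
Lemma ftl_cons n a (h : {ffun 'I_n -> I}) : ftl (fcons a h) = h.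
Proof. by apply/ffunP => k; rewrite ffunE fconsS. Qed.
Lemma fsnoc_eta n (h : {ffun 'I_n.+1 -> I}) : fsnoc (finit h) (h ord_max) = h.
Proof.
apply/ffunP => k; case: (unliftP ord_max k) => [k'|] ->; first by rewrite fsnocS ffunE.
by rewrite fsnocN.
Qed.
Lemma finit_snoc n b (h : {ffun 'I_n -> I}) : finit (fsnoc h b) = h.
Proof. by apply/ffunP => k; rewrite ffunE fsnocS. Qed.

Lemma sum_fcons {R : realType} n (F : {ffun 'I_n.+1 -> I} -> R) :
  \sum_h F h = \sum_a \sum_h F (fcons a h).
Proof.
rewrite pair_big /= (reindex (fun p : I * {ffun 'I_n -> I} => fcons p.1 p.2)) //=.
apply: onW_bij; exists (fun h : {ffun 'I_n.+1 -> I} => (h ord0, ftl h)).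
  by case=> a h /=; rewrite fcons0 ftl_cons.
by move=> h /=; rewrite fcons_eta.
Qed.

Lemma sum_fsnoc {R : realType} n (F : {ffun 'I_n.+1 -> I} -> R) :
  \sum_h F h = \sum_h \sum_b F (fsnoc h b).
Proof.
rewrite pair_big /= (reindex (fun p : {ffun 'I_n -> I} * I => fsnoc p.1 p.2)) //=.
apply: onW_bij; exists (fun h : {ffun 'I_n.+1 -> I} => (finit h, h ord_max)).
  by case=> h b /=; rewrite fsnocN finit_snoc.
by move=> h /=; rewrite fsnoc_eta.
Qed.

Lemma sum_ffun1 {R : realType} (F : {ffun 'I_1 -> I} -> R) :
  \sum_h F h = \sum_a F [ffun => a].
Proof.
rewrite (reindex (fun a : I => [ffun => a])) //=.
apply: onW_bij; exists (fun h : {ffun 'I_1 -> I} => h ord0); first by move=> a; rewrite ffunE.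
move=> h; apply/ffunP => k; rewrite ffunE; congr (h _); apply/val_inj.
by case: k => -[].
Qed.

End FF.
Arguments fcons {I n}. Arguments ftl {I n}. Arguments fsnoc {I n}. Arguments finit {I n}.

Section Refine.
Context {Om : ptopologicalType} {R : realType}.
Local Notation B := (borel_space Om).
Context (mu : probability B R) (T : B -> B).
Hypothesis mpT : measure_preserving mu T.

Lemma iter_meas n : measurable_fun setT (iter n T).
Proof.
elim: n => [|n IH]; first exact: measurable_id.
have -> : iter n.+1 T = T \o iter n T by apply/funext => x; rewrite iterS.
exact: measurableT_comp mpT.1 IH.
Qed.

Lemma preimT_meas (f : B -> B) (A : set B) :
  measurable_fun setT f -> measurable A -> measurable (f @^-1` A).
Proof. by move=> mf mA; rewrite -[X in measurable X]setTI; apply: mf. Qed.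

Lemma pm_inv (A : set B) : measurable A -> pm mu (T @^-1` A) = pm mu A.
Proof. by move=> mA; rewrite /pm mpT.2. Qed.

Context {I : finType} (P : I -> set B).
Hypothesis Ppart : is_partition P.

Lemma Pcover y : exists i, P i y.
Proof.
have : (\bigcup_(i in [set: I]) P i) y by rewrite Ppart.2.2.
by move=> [i _ Pi]; exists i.
Qed.

Lemma Pdisj i j y : P i y -> P j y -> i = j.
Proof.
move=> Pi Pj; apply/eqP; apply: contraT => ij.
by have := Ppart.2.1 _ _ ij; move/seteqP => [+ _] => /(_ y (conj Pi Pj)).
Qed.

Local Notation rf := (refine_n T P).

Lemma refine_cons n a (h : {ffun 'I_n -> I}) :
  rf n.+1 (fcons a h) = P a `&` T @^-1` rf n h.
Proof.
apply/seteqP; split => w /=.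
  move=> H; split; first by have := H ord0; rewrite fcons0.
  by move=> k; have := H (lift ord0 k); rewrite fconsS lift0 iterSr.
move=> [Pa H] k; case: (unliftP ord0 k) => [k'|] ->; last by rewrite fcons0.
by rewrite fconsS lift0 iterSr; apply: H.
Qed.

Lemma refine_snoc n b (h : {ffun 'I_n -> I}) :
  rf n.+1 (fsnoc h b) = rf n h `&` (iter n T) @^-1` P b.
Proof.
apply/seteqP; split => w /=.
  move=> H; split; last by have := H ord_max; rewrite fsnocN.
  by move=> k; have := H (lift ord_max k); rewrite fsnocS lift_max.
move=> [H Pb] k; case: (unliftP ord_max k) => [k'|] ->; last by rewrite fsnocN.
by rewrite fsnocS lift_max; apply: H.
Qed.

Lemma refine_cons_snoc n a (m : {ffun 'I_n -> I}) b :
  rf n.+2 (fcons a (fsnoc m b)) = rf n.+1 (fcons a m) `&` (iter n.+1 T) @^-1` P b.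
Proof.
rewrite refine_cons refine_snoc refine_cons.
by apply/seteqP; split => w /=; rewrite -iterSr iterS; tauto.
Qed.

Lemma refine_meas n (h : {ffun 'I_n -> I}) : measurable (rf n h).
Proof.
elim: n h => [|n IH] h.
  suff -> : rf 0 h = setT by exact: measurableT.
  by apply/seteqP; split => // w _ [].
rewrite -[h]fcons_eta refine_cons; apply: measurableI; first exact: Ppart.1.
exact: preimT_meas mpT.1 (IH _).
Qed.

Lemma marg_snoc n (h : {ffun 'I_n -> I}) :
  pm mu (rf n h) = \sum_b pm mu (rf n.+1 (fsnoc h b)).
Proof.
apply: pm_split => [b|i j ij|x]; first exact: refine_meas.
  rewrite !refine_snoc; apply/seteqP; split => // w [[_ Pi] [_ Pj]].
  by move: ij; rewrite (Pdisj _ _ _ Pi Pj) eqxx.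
split; last by move=> [b]; rewrite refine_snoc => -[].
by move=> H; have [b Pb] := Pcover (iter n T x); exists b; rewrite refine_snoc.
Qed.

Lemma marg_cons n (h : {ffun 'I_n -> I}) :
  pm mu (rf n h) = \sum_a pm mu (rf n.+1 (fcons a h)).
Proof.
rewrite -pm_inv; last exact: refine_meas.
apply: pm_split => [b|i j ij|x]; first exact: refine_meas.
  rewrite !refine_cons; apply/seteqP; split => // w [[Pi _] [Pj _]].
  by move: ij; rewrite (Pdisj _ _ _ Pi Pj) eqxx.
split; last by move=> [b]; rewrite refine_cons => -[].
by move=> H; have [b Pb] := Pcover x; exists b; rewrite refine_cons.
Qed.

Lemma entropyE (J : finType) (Q : J -> set B) :
  entropy mu Q = - \sum_j gl (pm mu (Q j)).
Proof. by []. Qed.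

Lemma E_mono n : entropy mu (rf n) <= entropy mu (rf n.+1).
Proof.
rewrite !entropyE lerN2 (sum_fsnoc _ (fun h => gl (pm mu (rf n.+1 h)))).
apply: ler_sum => h _; rewrite marg_snoc; apply: gl_sum_le => b; exact: pm_ge0.
Qed.

Lemma E1 : entropy mu (rf 1) = entropy mu P.
Proof.
rewrite !entropyE (sum_ffun1 (fun h => gl (pm mu (rf 1 h)))); congr (- _).
apply: eq_bigr => a _; congr (gl (pm mu _)); apply/seteqP; split => w /=.
  by move=> /(_ ord0); rewrite ffunE.
by move=> Pa k; rewrite ffunE (ord1 k).
Qed.

Lemma E_conc n : entropy mu (rf n.+2) + entropy mu (rf n) <=
  entropy mu (rf n.+1) + entropy mu (rf n.+1).
Proof.
pose p a (m : {ffun 'I_n -> I}) b := pm mu (rf n.+2 (fcons a (fsnoc m b))).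
have e2 : \sum_h gl (pm mu (rf n.+2 h)) = \sum_m \sum_a \sum_b gl (p a m b).
  rewrite (sum_fcons _ (fun h => gl (pm mu (rf n.+2 h)))) [RHS]exchange_big /=.
  apply: eq_bigr => a _.
  by rewrite (sum_fsnoc _ (fun h => gl (pm mu (rf n.+2 (fcons a h))))).
have e1a : \sum_h gl (pm mu (rf n.+1 h)) = \sum_m \sum_a gl (\sum_b p a m b).
  rewrite (sum_fcons _ (fun h => gl (pm mu (rf n.+1 h)))) exchange_big /=.
  apply: eq_bigr => m _; apply: eq_bigr => a _; rewrite marg_snoc; congr (gl _).
  apply: eq_bigr => b _; rewrite /p refine_cons_snoc refine_snoc //.
have e1b : \sum_h gl (pm mu (rf n.+1 h)) = \sum_m \sum_b gl (\sum_a p a m b).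
  rewrite (sum_fsnoc _ (fun h => gl (pm mu (rf n.+1 h)))).
  by apply: eq_bigr => m _; apply: eq_bigr => b _; rewrite marg_cons.
have e0 : \sum_m gl (pm mu (rf n m)) = \sum_m gl (\sum_a \sum_b p a m b).
  apply: eq_bigr => m _; rewrite marg_cons; congr (gl _).
  by apply: eq_bigr => a _; rewrite marg_snoc; apply: eq_bigr => b _; rewrite /p refine_cons_snoc refine_snoc.
have G : \sum_m (\sum_a gl (\sum_b p a m b) + \sum_b gl (\sum_a p a m b)) <=
         \sum_m (\sum_a \sum_b gl (p a m b) + gl (\sum_a \sum_b p a m b)).
  by apply: ler_sum => m _; apply: gibbs => a b; exact: pm_ge0.
move: G; rewrite !big_split /= -e2 -e0 -e1a -e1b !entropyE; lra.
Qed.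

Lemma ks_part_le :
  ks_entropy_part mu T P <= entropy mu (rf 2) - entropy mu P.
Proof.
set u := fun n => entropy mu (rf n.+1) - entropy mu (rf n).
have du : nonincreasing_seq u.
  by apply/nonincreasing_seqP => n; rewrite /u; have := E_conc n; lra.
have lb : has_lbound (range u).
  by exists 0 => _ [k _ <-]; rewrite /u subr_ge0 E_mono.
have cu := nonincreasing_is_cvgn du lb.
rewrite -E1; exact: (nonincreasing_cvgn_ge du cu 1).
Qed.

End Refine.

Section Refinement.
Context {Om : ptopologicalType} {R : realType}.
Local Notation B := (borel_space Om).
Context (mu : probability B R).

Lemma entropy_refine (J K : finType) (Pp : J -> set B) (Q : K -> set B) :
  (forall j, measurable (Pp j)) ->
  (forall i j, i != j -> Pp i `&` Pp j = set0) ->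
  is_partition Q -> (forall k, exists j, Q k `<=` Pp j) ->
  entropy mu Pp <= entropy mu Q.
Proof.
move=> mP dP [mQ [dQ cQ]] H; have [f Hf] := choice H.
have Pd i j y : Pp i y -> Pp j y -> i = j.
  move=> Pi Pj; apply/eqP; apply: contraT => ij.
  by have := dP _ _ ij; move/seteqP => [+ _] => /(_ y (conj Pi Pj)).
have Qc y : exists k, Q k y.
  have : (\bigcup_(i in [set: K]) Q i) y by rewrite cQ.
  by move=> [i _ Qi]; exists i.
have pmP j : pm mu (Pp j) = \sum_(k | f k == j) pm mu (Q k).
  rewrite big_mkcond /=.
  rewrite (@pm_split _ _ mu K (Pp j) (fun k => if f k == j then Q k else set0)).
  - by apply: eq_bigr => k _; case: ifP => // _; rewrite /pm measure0.
  - by move=> k; case: ifP => // _; exact: measurable0.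
  - move=> k k' kk'; case: ifP => _; last by rewrite set0I.
    by case: ifP => _; [exact: dQ|rewrite setI0].
  - move=> x; split.
      move=> Px; have [k Qk] := Qc x; exists k.
      by rewrite (Pd _ _ _ (Hf k x Qk) Px) eqxx.
    by move=> [k]; case: ifP => // /eqP <- /Hf.
rewrite !entropyE lerN2 (partition_big f xpredT) //=.
apply: ler_sum => j _; rewrite pmP; apply: gl_sum_le => k; exact: pm_ge0.
Qed.

End Refinement.


Section Ord.
Context {R : realType}.

Definition prec {n} (x : 'I_n -> R) (a b : 'I_n) : bool :=
  (x b < x a) || ((x a == x b) && (b < a)%N).

Lemma pattern_precE d (x : 'I_d.+1 -> R) pi :
  has_ordinal_pattern x pi <->
  (forall l1 l2 : 'I_d.+1, nat_of_ord l2 = (nat_of_ord l1).+1 -> prec x (pi l1) (pi l2)).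
Proof.
rewrite /has_ordinal_pattern /prec; split => H l1 l2 e; have := H l1 l2 e;
  set a := pi l1; set b := pi l2.
  move=> [xab abl]; case: (ltgtP (x b) (x a)) => //=; first by move=> ba; move: xab; rewrite leNgt ba.
  by move=> ab; apply: abl.
case/orP => [ba|/andP[/eqP-> ba]]; last by split.
by split; [exact: ltW|move=> e'; move: ba; rewrite e' ltxx].
Qed.

Variable n : nat.
Implicit Types (x : 'I_n -> R) (a b c : 'I_n).

Lemma prec_irr x a : prec x a a = false.
Proof. by rewrite /prec ltxx ltnn andbF. Qed.

Lemma prec_trans {x a b c} : prec x a b -> prec x b c -> prec x a c.
Proof.
rewrite /prec => /orP[ba|/andP[/eqP eab ba]] /orP[cb|/andP[/eqP ebc cb]].
- by rewrite (lt_trans cb ba).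
- by rewrite -ebc ba.
- by rewrite eab cb.
- by rewrite eab ebc eqxx (ltn_trans cb ba) orbT.
Qed.

Lemma prec_total {x a b} : a != b -> prec x a b || prec x b a.
Proof.
move=> ab; rewrite /prec; case: (ltgtP (x a) (x b)) => //= _.
case: (ltngtP a b) => // e; by move: ab; rewrite -(inj_eq val_inj) /= e eqxx.
Qed.

Lemma prec_asym {x a b} : prec x a b -> prec x b a = false.
Proof. by move=> ab; apply/negP => /(prec_trans ab); rewrite prec_irr. Qed.

Definition rank x a : nat := (\sum_(c : 'I_n) prec x c a)%N.

Lemma rank_lt {x a b} : prec x a b -> (rank x a < rank x b)%N.
Proof.
move=> pab; rewrite /rank (bigD1 a)//= [X in (_ < X)%N](bigD1 a)//= prec_irr pab add0n add1n ltnS.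
apply: leq_sum => c _; case: (boolP (prec x c a)) => // pca.
by rewrite (prec_trans pca pab).
Qed.

Lemma rank_inj x : injective (rank x).
Proof.
move=> a b e; apply/eqP; apply: contraT => ab.
by have := prec_total (x:=x) ab; case/orP => /rank_lt; rewrite e ltnn.
Qed.

Lemma rank_bound x a : (rank x a < n)%N.
Proof.
rewrite /rank (bigD1 a)//= prec_irr add0n.
apply: (@leq_ltn_trans (\sum_(c | c != a) 1)%N).
  by apply: leq_sum => c _; case: prec.
rewrite sum1_card cardC1 card_ord.
by case: n a => [[]//|m a]; rewrite ltnS.
Qed.

Lemma sum_lt (m l : nat) : (\sum_(i < m) (i < l : nat))%N = minn m l.
Proof.
elim: m => [|m IH]; first by rewrite big_ord0 min0n.
rewrite big_ord_recr /= IH.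
case: (ltnP m l) => ml; first by rewrite addn1 (minn_idPl ml).
by rewrite addn0 (minn_idPr (leqW ml)).
Qed.

End Ord.
Arguments rank {R n} x a.
Arguments prec_total {R n x a b}. Arguments prec_trans {R n x a b c}. Arguments prec_asym {R n x a b}.
Arguments rank_lt {R n x a b}. Arguments rank_inj {R n} x [x1 x2]. Arguments prec_irr {R n} x a.
Arguments rank_bound {R n} x a.

Section Ord2.
Context {R : realType} (d : nat).
Implicit Types (x y : 'I_d.+1 -> R) (pi : {perm 'I_d.+1}).

Definition rk x (a : 'I_d.+1) : 'I_d.+1 := Ordinal (rank_bound x a).
Lemma rk_inj x : injective (rk x).
Proof. by move=> a b /(congr1 val) /= /rank_inj. Qed.
Definition pat x : {perm 'I_d.+1} := ((perm (rk_inj x))^-1)%g.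

Lemma rank_pat x l : rank x (pat x l) = l.
Proof.
have := permKV (perm (rk_inj x)) l; rewrite permE => /(congr1 val) /=.
by rewrite /pat.
Qed.

Lemma pat_ok x : has_ordinal_pattern x (pat x).
Proof.
apply/pattern_precE => l1 l2 e.
have ne : pat x l1 != pat x l2.
  apply/eqP => E; have := rank_pat x l1; rewrite E rank_pat => h.
  by move: e; rewrite h => /n_Sn.
case/orP: (prec_total (x:=x) ne) => // /rank_lt; rewrite !rank_pat e ltnNge leqnSn.
by [].
Qed.

Lemma K_pos {x pi} : has_ordinal_pattern x pi ->
  forall m (l1 l2 : 'I_d.+1), nat_of_ord l2 = (l1 + m.+1)%N -> prec x (pi l1) (pi l2).
Proof.
move/pattern_precE => H; elim => [|m IH] l1 l2 e; first by apply: H; rewrite e addn1.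
have hlt : (l1 + m.+1 < d.+1)%N by have := ltn_ord l2; lia.
apply: (prec_trans (b := pi (Ordinal hlt))); first exact: IH.
by apply: H; rewrite e /= !addnS.
Qed.

Lemma K {x pi} : has_ordinal_pattern x pi ->
  forall l1 l2, prec x (pi l1) (pi l2) = (l1 < l2)%N.
Proof.
move=> H l1 l2; case: (ltngtP l1 l2) => e.
- by apply: (K_pos H ((l2 - l1).-1)); lia.
- by apply: prec_asym; apply: (K_pos H ((l1 - l2).-1)); lia.
- by rewrite (val_inj e) prec_irr.
Qed.

Lemma rank_pi {x pi} : has_ordinal_pattern x pi -> forall l, rank x (pi l) = l.
Proof.
move=> H l; rewrite /rank (reindex_inj (@perm_inj _ pi)) /=.
rewrite (eq_bigr (fun l1 : 'I_d.+1 => (l1 < l : nat))); last by move=> l1 _; rewrite K.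
by rewrite sum_lt; apply/minn_idPr/ltnW.
Qed.

Lemma pattern_unique x pi pi' :
  has_ordinal_pattern x pi -> has_ordinal_pattern x pi' -> pi = pi'.
Proof.
move=> H H'; apply/permP => l; apply: (@rank_inj _ _ x).
by rewrite (rank_pi H) (rank_pi H').
Qed.

Lemma pattern_eqprec x y pi :
  has_ordinal_pattern x pi -> has_ordinal_pattern y pi ->
  forall a b, prec x a b = prec y a b.
Proof.
move=> Hx Hy a b; rewrite -(permKV pi a) -(permKV pi b).
by rewrite (K Hx) (K Hy).
Qed.

Lemma pattern_transfer x y pi : (forall a b, prec x a b = prec y a b) ->
  has_ordinal_pattern x pi -> has_ordinal_pattern y pi.
Proof.
move=> E /pattern_precE H; apply/pattern_precE => l1 l2 e; rewrite -E; exact: H.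
Qed.

End Ord2.
Arguments pat {R d} x. Arguments pat_ok {R d} x. Arguments pattern_unique {R d x pi pi'}.
Arguments pattern_eqprec {R d x y pi}. Arguments pattern_transfer {R d x y pi}.

Section OrdPart.
Context {Om : ptopologicalType} {R : realType}.
Local Notation B := (borel_space Om).
Context (mu : probability B R) (T : B -> B).
Hypothesis mpT : measure_preserving mu T.
Context {N : nat} (X : 'I_N -> B -> R).
Hypothesis mX : forall i, measurable_fun setT (X i).

Lemma in_bigsetI (J : eqType) (s : seq J) (D : J -> set B) x :
  (\big[setI/setT]_(j <- s) D j) x <-> forall j, j \in s -> D j x.
Proof.
elim: s => [|a s IH]; first by rewrite big_nil; split.
rewrite big_cons; split.
  move=> [Da /IH H] j; rewrite in_cons => /orP[/eqP->//|js]; exact: H.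
move=> H; split; first by apply: H; rewrite mem_head.
by apply/IH => j js; apply: H; rewrite in_cons js orbT.
Qed.

Lemma mfin_forall (K : finType) (A : K -> set B) :
  (forall k, measurable (A k)) -> measurable [set w | forall k, A k w].
Proof.
move=> mA; have -> : [set w | forall k, A k w] = \big[setI/setT]_(k <- enum K) A k.
  apply/seteqP; split => w /=.
    by move=> H; apply/in_bigsetI => j _; apply: H.
  by move/in_bigsetI => H k; apply: H; rewrite mem_enum.
by apply: bigsetI_measurable.
Qed.

Lemma mset_lt (f g : B -> R) : measurable_fun setT f -> measurable_fun setT g ->
  measurable [set w | f w < g w].
Proof.
move=> mf mg; have := measurable_fun_ltr mf mg measurableT (Y := [set true]) I.
by rewrite setTI; congr measurable; apply/seteqP; split => w /=.
Qed.

Lemma mset_eq (f g : B -> R) : measurable_fun setT f -> measurable_fun setT g ->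
  measurable [set w | f w = g w].
Proof.
move=> mf mg.
have -> : [set w | f w = g w] = ~` ([set w | f w < g w] `|` [set w | g w < f w]).
  apply/seteqP; split => w /=.
    by move=> ->; rewrite ltxx => -[].
  move=> H; apply/eqP; rewrite eq_le !leNgt; apply/andP; split; apply/negP => h; apply: H; [right|left] => //.
by apply: measurableC; apply: measurableU; apply: mset_lt.
Qed.

Lemma iterT_meas n : measurable_fun setT (iter n T).
Proof. exact: (@iter_meas _ _ mu T mpT n). Qed.

Lemma delay_meas i d j : measurable_fun setT (fun w => delay_vector T X i d w j).
Proof. exact: measurableT_comp (mX i) (iterT_meas _). Qed.

Lemma meas_iff (A C : set B) : measurable A -> (forall w, A w <-> C w) -> measurable C.
Proof.
by move=> mA H; have -> : C = A by apply/seteqP; split => w /H.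
Qed.

Lemma OP_meas d pis : measurable (ordinal_partition T X d pis).
Proof.
rewrite /ordinal_partition; apply: mfin_forall => i.
apply: (@meas_iff ([set w | forall l1 l2 : 'I_d.+1, nat_of_ord l2 = (nat_of_ord l1).+1 ->
     prec (delay_vector T X i d w) (pis i l1) (pis i l2)])); last first.
  by move=> w; rewrite pattern_precE.
apply: mfin_forall => l1; apply: mfin_forall => l2.
case: (eqVneq (nat_of_ord l2) (nat_of_ord l1).+1) => [e|ne]; last first.
  apply: (@meas_iff setT _ measurableT) => w; split => // _ e; move: ne; rewrite e eqxx.
  by [].
set a := pis i l1; set b := pis i l2.
apply: (@meas_iff ([set w | delay_vector T X i d w b < delay_vector T X i d w a] `|`
  ([set w | delay_vector T X i d w a = delay_vector T X i d w b] `&` [set _ | (b < a)%N]))); last first.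
  move=> w /=; rewrite /prec; split.
    by case => [->//|[-> ->]] _; rewrite eqxx orbT.
  by move=> /(_ e) /orP [->|/andP[/eqP -> ->]]; [left|right].
apply: measurableU; first by apply: mset_lt; exact: delay_meas.
apply: measurableI; first by apply: mset_eq; exact: delay_meas.
by case: (b < a)%N; [apply: (@meas_iff setT _ measurableT)|apply: (@meas_iff set0 _ measurable0)] => w.
Qed.

Lemma OP_disj d (pis pis' : {ffun 'I_N -> {perm 'I_d.+1}}) : pis != pis' ->
  ordinal_partition T X d pis `&` ordinal_partition T X d pis' = set0.
Proof.
move=> ne; apply/seteqP; split => // w [H H'] /=; move: ne.
suff -> : pis = pis' by rewrite eqxx.
by apply/ffunP => i; apply: pattern_unique (H i) (H' i).
Qed.

Lemma OP_cover d : \bigcup_(pis in [set: {ffun 'I_N -> {perm 'I_d.+1}}])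
  ordinal_partition T X d pis = [set: B].
Proof.
apply/seteqP; split => // w _.
exists [ffun i => pat (delay_vector T X i d w)] => //= i.
by rewrite ffunE; exact: pat_ok.
Qed.

Lemma OP_part d : is_partition (ordinal_partition T X d).
Proof. by split; [exact: OP_meas|split; [exact: OP_disj|exact: OP_cover]]. Qed.

Lemma refine_disj (I : finType) (P : I -> set B) n (h h' : {ffun 'I_n -> I}) :
  (forall i j, i != j -> P i `&` P j = set0) -> h != h' ->
  refine_n T P n h `&` refine_n T P n h' = set0.
Proof.
move=> dP ne; apply/seteqP; split => // w [H H'] /=.
have [k hk] : exists k, h k != h' k.
  apply/existsP; apply: contraNT ne => /existsPn E.
  by apply/eqP/ffunP => k; apply/eqP; have := E k; rewrite negbK.
by have := dP _ _ hk; move/seteqP => [+ _] => /(_ _ (conj (H k) (H' k))).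
Qed.

Lemma prec_emb n m (x : 'I_n -> R) (y : 'I_m -> R) (e : 'I_n -> 'I_m) :
  (forall a, x a = y (e a)) -> (forall a b, (e b < e a)%N = (b < a)%N) ->
  forall a b, prec x a b = prec y (e a) (e b).
Proof. by move=> xy ee a b; rewrite /prec !xy ee. Qed.

Definition emb d (t : 'I_2) (a : 'I_d.+1) : 'I_d.+2 :=
  if nat_of_ord t == 0%N then lift ord0 a else widen_ord (leqnSn _) a.

Lemma emb_val d (t : 'I_2) w i a :
  delay_vector T X i d (iter t T w) a = delay_vector T X i d.+1 w (emb d t a).
Proof.
rewrite /delay_vector /emb; case: t => -[|[|]]//= _.
by rewrite -iterSr subSn// -ltnS.
Qed.

Lemma emb_lt d t (a b : 'I_d.+1) : (emb d t b < emb d t a)%N = (b < a)%N.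
Proof. by rewrite /emb; case: ifP => _ //=; rewrite !lift0 ltnS. Qed.

Lemma OP_ref d (k : {ffun 'I_N -> {perm 'I_d.+2}}) :
  exists j : {ffun 'I_2 -> {ffun 'I_N -> {perm 'I_d.+1}}},
    ordinal_partition T X d.+1 k `<=` refine_n T (ordinal_partition T X d) 2 j.
Proof.
case: (pselect (exists w, ordinal_partition T X d.+1 k w)) => [[w0 Hw0]|none]; last first.
  by exists [ffun => [ffun => 1%g]] => w Hw; exfalso; apply: none; exists w.
exists [ffun t : 'I_2 => [ffun i => pat (delay_vector T X i d (iter t T w0))]].
move=> w Hw t i; rewrite !ffunE.
apply: (pattern_transfer _ (pat_ok _)) => a b.
rewrite (@prec_emb _ _ _ _ _ (emb_val d t w0 i) (@emb_lt d t)) (@prec_emb _ _ _ _ _ (emb_val d t w i) (@emb_lt d t)).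
exact: pattern_eqprec (Hw0 i) (Hw i) _ _.
Qed.

Lemma HA d : ks_entropy_part mu T (ordinal_partition T X d) <= cond_entropy mu T X d.
Proof. exact: (@ks_part_le _ _ mu T mpT _ _ (OP_part d)). Qed.

Lemma HB d : cond_entropy mu T X d <= sorting_entropy mu T X d.
Proof.
rewrite /cond_entropy /sorting_entropy lerD2r.
apply: entropy_refine; last exact: OP_ref.
- by move=> j; exact: (@refine_meas _ _ mu T mpT _ _ (OP_part d) 2 j).
- by move=> h h' ne; apply: refine_disj => //; exact: OP_disj.
- exact: OP_part.
Qed.

End OrdPart.


Section Asm.
Context {R : realType}.
Local Open Scope ereal_scope.

Lemma le_limn_esup_near (u v : (\bar R)^nat) :
  (\forall n \near \oo, u n <= v n) -> limn_esup u <= limn_esup v.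
Proof.
move=> [N _ HN]; rewrite !limn_esup_lim.
apply: lee_lim; [exact: is_cvg_esups|exact: is_cvg_esups|].
near=> n; apply: ge_ereal_sup => _ [k /= nk <-].
apply: le_trans (HN k _) _; first by rewrite /= (leq_trans _ nk)//; near: n; exists N.
by apply: ereal_sup_ubound; exists k.
Unshelve. all: by end_near. Qed.

Lemma le_limn_einf_near (u v : (\bar R)^nat) :
  (\forall n \near \oo, u n <= v n) -> limn_einf u <= limn_einf v.
Proof.
move=> H; rewrite /limn_einf leeN2; apply: le_limn_esup_near.
by apply: filterS H => n /=; rewrite leeN2.
Qed.

End Asm.

Section Asm2.
Context {R : realType}.

Lemma assemble (ks : \bar R) (h c s p E : nat -> R) :
  (fun d => (h d)%:E) @ \oo --> ks ->
  (forall d, h d <= c d) -> (forall d, c d <= s d) ->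
  (forall d, s d = E d.+1 - E d) -> (forall d, p d = E d / d%:R) ->
  ( (ks <= limn_esup (fun d => (c d)%:E)
     /\ limn_esup (fun d => (c d)%:E) <= limn_esup (fun d => (s d)%:E))%E
  /\ (ks <= limn_einf (fun d => (c d)%:E)
     /\ limn_einf (fun d => (c d)%:E) <= limn_einf (fun d => (s d)%:E))%E )
  /\
  ( ( (exists d0 : nat, (1 <= d0)%N /\
         forall d : nat, (d0 <= d)%N -> p d.+1 <= p d)
      \/ (exists l : R, (fun d => s d) @ \oo --> l) ) ->
    ( (ks <= limn_esup (fun d => (c d)%:E)
       /\ limn_esup (fun d => (c d)%:E) <= limn_esup (fun d => (s d)%:E)
       /\ limn_esup (fun d => (s d)%:E) <= limn_esup (fun d => (p d)%:E))%E
    /\ (ks <= limn_einf (fun d => (c d)%:E)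
       /\ limn_einf (fun d => (c d)%:E) <= limn_einf (fun d => (s d)%:E)
       /\ limn_einf (fun d => (s d)%:E) <= limn_einf (fun d => (p d)%:E))%E ) ).
Proof.
move=> hOR hc cs sE pE.
have [ksinf _] := cvg_limn_einf_sup hOR.
have k1 : (ks <= limn_einf (fun d => (c d)%:E))%E.
  by rewrite -ksinf; apply: le_limn_einf_near; apply: nearW => d; rewrite lee_fin.
have k2 : (limn_einf (fun d => (c d)%:E) <= limn_einf (fun d => (s d)%:E))%E.
  by apply: le_limn_einf_near; apply: nearW => d; rewrite lee_fin.
have k3 : (limn_esup (fun d => (c d)%:E) <= limn_esup (fun d => (s d)%:E))%E.
  by apply: le_limn_esup_near; apply: nearW => d; rewrite lee_fin.
have k4 : (ks <= limn_esup (fun d => (c d)%:E))%E.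
  exact: le_trans k1 (limn_einf_sup _).
have sp : ( (exists d0 : nat, (1 <= d0)%N /\
         forall d : nat, (d0 <= d)%N -> p d.+1 <= p d)
      \/ (exists l : R, (fun d => s d) @ \oo --> l) ) -> (limn_esup (fun d => (s d)%:E) <= limn_esup (fun d => (p d)%:E))%E /\
          (limn_einf (fun d => (s d)%:E) <= limn_einf (fun d => (p d)%:E))%E.
  case=> [[d0 [d01 Hd]]|[l sl]].
    have ev : \forall d \near \oo, ((s d)%:E <= (p d)%:E)%E.
      exists d0 => // d /= dd0; rewrite lee_fin.
      have dpos : 0 < d%:R :> R by rewrite ltr0n (leq_trans d01).
      have := Hd d dd0; rewrite !pE sE.
      set x := E d / d%:R => H.
      have Ed : E d = x * d%:R by rewrite /x divfK// gt_eqF.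
      have dp1 : 0 < d.+1%:R :> R by rewrite ltr0n.
      rewrite ler_pdivrMr// in H.
      rewrite Ed; move: H; rewrite -addn1 natrD mulrDr mulr1 => H.
      by rewrite lerBlDr addrC.
    by split; [apply: le_limn_esup_near|apply: le_limn_einf_near].
  have Etel d : E d = E 0%N + series s d.
    rewrite seriesEnat /= (eq_bigr (fun k => E k.+1 - E k)); last by move=> k _; rewrite sE.
    by rewrite telescope_sumr// addrC subrK.
  have pl : p @ \oo --> l.
    rewrite -cvg_shiftS.
    have -> : [sequence p n.+1]_n = (fun n => E 0%N * harmonic n + arithmetic_mean s n).
      apply/funext => n /=; rewrite pE Etel mulrDl.
      by rewrite /harmonic /arithmetic_mean /= (mulrC (n.+1%:R^-1)).
    rewrite -[l]add0r; apply: cvgD; last exact: cesaro.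
    rewrite -(mulr0 (E 0%N)); apply: cvgMl_tmp; exact: cvg_harmonic.
  have slE : (fun d => (s d)%:E) @ \oo --> l%:E by apply: cvg_EFin => //; exact: nearW.
  have plE : (fun d => (p d)%:E) @ \oo --> l%:E by apply: cvg_EFin => //; exact: nearW.
  have [-> ->] := cvg_limn_einf_sup slE.
  by have [-> ->] := cvg_limn_einf_sup plE.
split; first by [].
move=> /sp [sp1 sp2]; by [].
Qed.
End Asm2.

Theorem theorem1 (Om : ptopologicalType) (R : realType)
  (mu : probability (borel_space Om) R)
  (T : borel_space Om -> borel_space Om)
  (N : nat) (X : 'I_N -> borel_space Om -> R) :
  measure_preserving mu T ->
  (0 < N)%N ->
  (forall i : 'I_N, measurable_fun setT (X i)) ->
  (* condition (OR) *)
  (fun d => (ks_entropy_part mu T (ordinal_partition T X d))%:E) @ \oo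
    --> ks_entropy mu T ->
  (* (i), with upper and with lower limits *)
  ( (ks_entropy mu T <= limn_esup (fun d => (cond_entropy mu T X d)%:E)
     /\ limn_esup (fun d => (cond_entropy mu T X d)%:E)
          <= limn_esup (fun d => (sorting_entropy mu T X d)%:E))%E
  /\ (ks_entropy mu T <= limn_einf (fun d => (cond_entropy mu T X d)%:E)
     /\ limn_einf (fun d => (cond_entropy mu T X d)%:E)
          <= limn_einf (fun d => (sorting_entropy mu T X d)%:E))%E )
  /\
  (* (ii) *)
  ( ( (exists d0 : nat, (1 <= d0)%N /\
         forall d : nat, (d0 <= d)%N ->
           perm_entropy mu T X d.+1 <= perm_entropy mu T X d)
      \/ (exists l : R, (fun d => sorting_entropy mu T X d) @ \oo --> l) ) ->
    ( (ks_entropy mu T <= limn_esup (fun d => (cond_entropy mu T X d)%:E)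
       /\ limn_esup (fun d => (cond_entropy mu T X d)%:E)
            <= limn_esup (fun d => (sorting_entropy mu T X d)%:E)
       /\ limn_esup (fun d => (sorting_entropy mu T X d)%:E)
            <= limn_esup (fun d => (perm_entropy mu T X d)%:E))%E
    /\ (ks_entropy mu T <= limn_einf (fun d => (cond_entropy mu T X d)%:E)
       /\ limn_einf (fun d => (cond_entropy mu T X d)%:E)
            <= limn_einf (fun d => (sorting_entropy mu T X d)%:E)
       /\ limn_einf (fun d => (sorting_entropy mu T X d)%:E)
            <= limn_einf (fun d => (perm_entropy mu T X d)%:E))%E ) ).
Proof.
Proof.
move=> mpT N0 mX hOR.
apply: (@assemble R _ (fun d => ks_entropy_part mu T (ordinal_partition T X d))
  (cond_entropy mu T X) (sorting_entropy mu T X) (perm_entropy mu T X)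
  (fun d => entropy mu (ordinal_partition T X d)) hOR).
- by move=> d; apply: HA.
- by move=> d; apply: HB.
- by [].
- by [].
Qed.
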